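(* There exists a task in the two-party one-way communication (Holevo–Frenkel–Weiner) scenario for which the utility of one qubit of communication (with no pre-shared correlation) is higher than the utility of one classical bit of communication assisted by $1$ bit of shared randomness: there exist finite sets $\mathcal{X},\mathcal{B}$ and a payoff function $\beta$ such that $\sup_{P\in\mathcal{Q}}\beta(P)>\sup_{P\in\mathcal{C}_2}\beta(P)$.
   Context: Scenario: Alice receives an input $x$ from a finite set $\mathcal{X}$, Bob must output $b$ from a finite set $\mathcal{B}$; a correlation is $P=(P(b|x))$, a task is a real payoff function $\beta$ on correlations, and the utility of a resource is $\sup\beta(P)$ over correlations achievable with it. $\mathcal{C}$: correlations $P(b|x)=\sum_{m\in\{0,1\}}E(m|x)D(b|m)$ with $E(\cdot|x)$ a probability distribution on $\{0,1\}$ for each $x$ and $D(\cdot|m)$ a probability distribution on $\mathcal{B}$ for each $m$. $\mathcal{C}_2$ (one classical bit plus $1$ bit of shared randomness): correlations $qP_0+(1-q)P_1$ with $q\in[0,1]$ and $P_0,P_1\in\mathcal{C}$. $\mathcal{Q}$ (one qubit, no shared correlation): correlations $P(b|x)=\operatorname{Tr}(\rho_x\pi_b)$ with each $\rho_x$ a density operator on $\mathbb{C}^2$ and $\{\pi_b\}_{b\in\mathcal{B}}$ a POVM on $\mathbb{C}^2$. *)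

(* Defs.v *)
From HB Require Import structures.
From mathcomp Require Import all_boot all_order all_algebra.
From mathcomp Require Import all_classical all_reals.
From mathcomp Require Import ereal.
From mathcomp Require Import Rstruct.
From mathcomp.real_closed Require Import complex.

Set Implicit Arguments. Unset Strict Implicit. Unset Printing Implicit Defensive.
Import Order.TTheory GRing.Theory Num.Theory.
Local Open Scope ring_scope.

Notation RR := Rdefinitions.R.
Notation CC := (complex RR).

(* A correlation P(b|x) is represented as P x b. *)
Definition corr (X B : finType) := X -> B -> RR.

Definition classical_bit (X B : finType) (P : corr X B) : Prop :=
  exists (E : X -> bool -> RR) (D : bool -> B -> RR),
    (forall x m, 0 <= E x m) /\ (forall x, \sum_(m : bool) E x m = 1) /\
    (forall m b, 0 <= D m b) /\ (forall m, \sum_(b : B) D m b = 1) /\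
    (forall x b, P x b = \sum_(m : bool) E x m * D m b).

Definition classical_bit_sr (X B : finType) (P : corr X B) : Prop :=
  exists (q : RR) (P0 P1 : corr X B),
    0 <= q /\ q <= 1 /\ classical_bit P0 /\ classical_bit P1 /\
    (forall x b, P x b = q * P0 x b + (1 - q) * P1 x b).

Definition adj (m n : nat) (A : 'M[CC]_(m, n)) : 'M[CC]_(n, m) :=
  (map_mx Num.conj A)^T.

Definition psd (A : 'M[CC]_2) : Prop :=
  adj A = A /\ forall v : 'cV[CC]_2, 0 <= (adj v *m A *m v) 0 0.

Definition density (rho : 'M[CC]_2) : Prop := psd rho /\ \tr rho = 1.

Definition povm (B : finType) (pi : B -> 'M[CC]_2) : Prop :=
  (forall b, psd (pi b)) /\ \sum_(b : B) pi b = 1%:M.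

Definition qubit (X B : finType) (P : corr X B) : Prop :=
  exists (rho : X -> 'M[CC]_2) (pi : B -> 'M[CC]_2),
    (forall x, density (rho x)) /\ povm pi /\
    (forall x b, real_complex _ (P x b) = \tr (rho x *m pi b)).

Definition utility (X B : finType) (S : corr X B -> Prop)
  (beta : corr X B -> RR) : \bar RR :=
  ereal_sup [set (beta P)%:E | P in S].

(* Main.v *)
Require Import Defs.
From mathcomp Require Import all_boot all_order all_algebra.
From mathcomp Require Import all_classical all_reals ereal Rstruct.
From mathcomp.real_closed Require Import complex.
From mathcomp Require Import ring lra.
Import Order.TTheory GRing.Theory Num.Theory.
Local Open Scope ring_scope.
Local Open Scope complex_scope.
Definition det3 (a11 a12 a13 a21 a22 a23 a31 a32 a33 : RR) :=
  a11*(a22*a33 - a23*a32) - a12*(a21*a33 - a23*a31) + a13*(a21*a32 - a22*a31).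

Lemma det3_rank2 (p1 p2 p3 r1 r2 r3 a1 a2 a3 b1 b2 b3 : RR) :
  det3 (p1*a1+r1*b1) (p1*a2+r1*b2) (p1*a3+r1*b3)
       (p2*a1+r2*b1) (p2*a2+r2*b2) (p2*a3+r2*b3)
       (p3*a1+r3*b1) (p3*a2+r3*b2) (p3*a3+r3*b3) = 0.
Proof. rewrite /det3; ring. Qed.

Notation X4 := 'I_4.
Notation B6 := 'I_6.
Definition xo (k : nat) (h : (k < 4)%N) : X4 := Ordinal h.
Definition bo (k : nat) (h : (k < 6)%N) : B6 := Ordinal h.

Definition Mk (P : corr X4 B6) (k : X4) (b b' : B6) : RR :=
  (P k b - P k b') - (P (@xo 0 isT) b - P ((@xo 0 isT)) b').

Lemma C2_det (P : corr X4 B6) : classical_bit_sr P ->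
  det3 (Mk P ((@xo 1 isT)) ((@bo 0 isT)) ((@bo 1 isT)))
       (Mk P ((@xo 1 isT)) ((@bo 2 isT)) ((@bo 3 isT)))
       (Mk P ((@xo 1 isT)) ((@bo 4 isT)) ((@bo 5 isT)))
       (Mk P ((@xo 2 isT)) ((@bo 0 isT)) ((@bo 1 isT)))
       (Mk P ((@xo 2 isT)) ((@bo 2 isT)) ((@bo 3 isT)))
       (Mk P ((@xo 2 isT)) ((@bo 4 isT)) ((@bo 5 isT)))
       (Mk P ((@xo 3 isT)) ((@bo 0 isT)) ((@bo 1 isT)))
       (Mk P ((@xo 3 isT)) ((@bo 2 isT)) ((@bo 3 isT)))
       (Mk P ((@xo 3 isT)) ((@bo 4 isT)) ((@bo 5 isT))) = 0.
Proof.
move=> [q [P0 [P1 [_ [_ [[E0 [D0 [_ [SE0 [_ [_ H0]]]]]] [[E1 [D1 [_ [SE1 [_ [_ H1]]]]]] H]]]]]]].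
set x0 := (@xo 0 isT).
have key : forall k b b', Mk P k b b' =
  (E0 k false - E0 x0 false) * (q * ((D0 false b - D0 true b) - (D0 false b' - D0 true b')))
  + (E1 k false - E1 x0 false) * ((1 - q) * ((D1 false b - D1 true b) - (D1 false b' - D1 true b'))).
  move=> k b b'; rewrite /Mk !H !H0 !H1 !big_bool /=.
  have e0 : forall x, E0 x true = 1 - E0 x false.
    by move=> x; move: (SE0 x); rewrite big_bool /=; lra.
  have e1 : forall x, E1 x true = 1 - E1 x false.
    by move=> x; move: (SE1 x); rewrite big_bool /=; lra.
  rewrite !e0 !e1; ring.
rewrite !key; exact: det3_rank2.
Qed.
Lemma conjE (a b : RR) : Num.conj (a +i* b) = a +i* (- b).
Proof. reflexivity. Qed.
Lemma conjcE (a b : RR) : (a +i* b)^* = a +i* (- b).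
Proof. reflexivity. Qed.
Lemma mulE (a b c d : RR) : (a +i* b) * (c +i* d) = (a*c - b*d) +i* (a*d + b*c).
Proof. reflexivity. Qed.
Lemma addE (a b c d : RR) : (a +i* b) + (c +i* d) = (a+c) +i* (b+d).
Proof. reflexivity. Qed.
Lemma leE (a b c d : RR) : ((a +i* b) <= (c +i* d)) = (d == b) && (a <= c).
Proof. reflexivity. Qed.
Lemma zeroE : (0 : CC) = 0 +i* 0. Proof. reflexivity. Qed.
Lemma oneE : (1 : CC) = 1 +i* 0. Proof. reflexivity. Qed.

Definition Mb (c x y z : RR) : 'M[CC]_2 := \matrix_(i < 2, j < 2)
  if val i == 0%N then (if val j == 0%N then (c*(1+z)) +i* 0 else (c*x) +i* (-(c*y)))
  else (if val j == 0%N then (c*x) +i* (c*y) else (c*(1-z)) +i* 0).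

Lemma tr_Mb c s1 s2 s3 d n1 n2 n3 :
  \tr (Mb c s1 s2 s3 *m Mb d n1 n2 n3) = (2*c*d*(1+s1*n1+s2*n2+s3*n3)) +i* 0.
Proof.
rewrite /mxtrace !big_ord_recr big_ord0 /= !mxE !big_ord_recr !big_ord0 /= !mxE /=.
rewrite !add0r !mulE !addE; apply/eqP; rewrite eq_complex /=; apply/andP; split; apply/eqP; ring.
Qed.

Lemma tr_Mb1 c x y z : \tr (Mb c x y z) = (2*c) +i* 0.
Proof.
rewrite /mxtrace !big_ord_recr big_ord0 /= !mxE /= add0r addE.
apply/eqP; rewrite eq_complex /=; apply/andP; split; apply/eqP; ring.
Qed.

Lemma adj_Mb c x y z : adj (Mb c x y z) = Mb c x y z.
Proof.
apply/matrixP => i j; rewrite !mxE.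
case: i => [[|[|?]] ?] //; case: j => [[|[|?]] ?] //=; rewrite conjE //; 
  apply/eqP; rewrite eq_complex /=; apply/andP; split; apply/eqP; ring.
Qed.

Lemma sum2 (F : 'I_2 -> CC) : \sum_(i < 2) F i = F ord0 + F ord_max.
Proof. rewrite big_ord_recl big_ord1; congr (_ + F _); exact: val_inj. Qed.
Lemma sum1 (F : 'I_1 -> CC) : \sum_(i < 1) F i = F ord0.
Proof. by rewrite big_ord1. Qed.
Lemma Mb00 c x y z : Mb c x y z ord0 ord0 = (c*(1+z)) +i* 0. Proof. rewrite mxE; reflexivity. Qed.
Lemma Mb01 c x y z : Mb c x y z ord0 ord_max = (c*x) +i* (-(c*y)). Proof. rewrite mxE; reflexivity. Qed.
Lemma Mb10 c x y z : Mb c x y z ord_max ord0 = (c*x) +i* (c*y). Proof. rewrite mxE; reflexivity. Qed.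
Lemma Mb11 c x y z : Mb c x y z ord_max ord_max = (c*(1-z)) +i* 0. Proof. rewrite mxE; reflexivity. Qed.

Lemma psd_Mb c x y z : 0 <= c ->
  (y = 0 /\ z = 0 /\ x^+2 <= 1) \/ (x = 0 /\ z = 0 /\ y^+2 <= 1) \/ (x = 0 /\ y = 0 /\ z^+2 <= 1) ->
  psd (Mb c x y z).
Proof.
move=> c0 sh; split; first exact: adj_Mb.
move=> v.
rewrite /adj mxE sum2 !mxE !sum2 !mxE.
have h0 : (\val (ord0 : 'I_2) == 0%N) = true by [].
have h1 : (\val (ord_max : 'I_2) == 0%N) = false by [].
rewrite !h0 !h1.
case: (v ord0 0) => a b; case: (v ord_max 0) => e f.
rewrite ?conjcE ?conjE !mulE !addE leE; apply/andP; split.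
  apply/eqP; ring.
case: sh => [[-> [-> h]]|[[-> [-> h]]|[-> [-> h]]]].
- have K1 : 0 <= (1 - x^+2) * (e^+2 + f^+2) by apply: mulr_ge0; [lra | rewrite addr_ge0 // sqr_ge0].
  have S1 := sqr_ge0 (a+x*e); have S2 := sqr_ge0 (b+x*f).
  have K : 0 <= a^+2+b^+2+e^+2+f^+2 + 2*x*(a*e+b*f) by nra.
  nra.
- have K1 : 0 <= (1 - y^+2) * (e^+2 + f^+2) by apply: mulr_ge0; [lra | rewrite addr_ge0 // sqr_ge0].
  have S1 := sqr_ge0 (a+y*f); have S2 := sqr_ge0 (b-y*e).
  have S3 := sqr_ge0 (a-y*f); have S4 := sqr_ge0 (b+y*e).
  have K : 0 <= a^+2+b^+2+e^+2+f^+2 + 2*y*(a*f-b*e) by nra.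
  have K' : 0 <= a^+2+b^+2+e^+2+f^+2 - 2*y*(a*f-b*e) by nra.
  nra.
- have Z1 : 0 <= 1 - z by nra.
  have Z2 : 0 <= 1 + z by nra.
  have K : 0 <= (1+z)*(a^+2+b^+2) + (1-z)*(e^+2+f^+2).
    by apply: addr_ge0; apply: mulr_ge0 => //; rewrite addr_ge0 // sqr_ge0.
  nra.
Qed.

Lemma sumC n (f g : 'I_n -> RR) :
  \sum_(i < n) (f i +i* g i) = (\sum_(i < n) f i) +i* (\sum_(i < n) g i).
Proof.
apply: (big_rec3 (fun x y z => x = y +i* z)) => [//|i a b c _ ->]; reflexivity.
Qed.

Definition sv (x : X4) (k : nat) : RR := if val x == k then 1 else 0.
Definition nv (b : B6) (k : nat) : RR :=
  if ((val b)./2).+1 == k then (if odd (val b) then -1 else 1) else 0.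
Definition Pstar : corr X4 B6 := fun x b =>
  (1 + sv x 1 * nv b 1 + sv x 2 * nv b 2 + sv x 3 * nv b 3) / 6.
Definition rho (x : X4) := Mb (1/2) (sv x 1) (sv x 2) (sv x 3).
Definition pim (b : B6) := Mb (1/6) (nv b 1) (nv b 2) (nv b 3).

Lemma density_rho x : density (rho x).
Proof.
split.
  apply: psd_Mb; first lra.
  case: x => [[|[|[|[|?]]]] ?] //; rewrite /sv /=; lra.
rewrite tr_Mb1 oneE; congr (_ +i* _); by field.
Qed.

Lemma povm_pim : povm pim.
Proof.
split.
  move=> b; apply: psd_Mb; first lra.
  case: b => [[|[|[|[|[|[|?]]]]]] ?] //; rewrite /nv /=; lra.
apply/matrixP => i j; rewrite summxE /pim.
case: i => [[|[|?]] ?] //; case: j => [[|[|?]] ?] //;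
  under eq_bigr => k _ do rewrite mxE /=;
  rewrite sumC mxE /=.
all: rewrite !big_ord_recr !big_ord0 /nv /= ?oneE ?zeroE.
all: apply/eqP; rewrite eq_complex /=; apply/andP; split; apply/eqP; lra.
Qed.

Lemma qubit_Pstar : qubit Pstar.
Proof.
exists rho, pim; split; first exact: density_rho.
split; first exact: povm_pim.
move=> x b; rewrite /rho /pim tr_Mb.
rewrite /real_complex_def; congr (_ +i* _); rewrite /Pstar; by field.
Qed.

Lemma Pstar_notC2 : ~ classical_bit_sr Pstar.
Proof.
move=> H; have := @C2_det Pstar H.
rewrite /det3 /Mk /Pstar /sv /nv /=.
move=> E; lra.
Qed.

Close Scope complex_scope.
Local Open Scope ereal_scope.

Theorem theorem4 :
  exists (X B : finType) (beta : corr X B -> RR),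
    utility (@classical_bit_sr X B) beta < utility (@qubit X B) beta.
Proof.
exists 'I_4, 'I_6, (fun P => if pselect (classical_bit_sr P) then 0%R else 1%R).
apply: (@le_lt_trans _ _ 0%E).
  apply: ge_ereal_sup => _ [P HP <-]; case: pselect => //= _.
apply: (@lt_le_trans _ _ 1%E); first by rewrite lte_fin; lra.
apply: ereal_sup_ubound; exists Pstar; first exact: qubit_Pstar.
by case: pselect => // Hc; case: (Pstar_notC2 Hc).
Qed.
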